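(* For each $k\in\mathbb N$, there is a bilabelled graph in $\mathcal P_k$ whose underlying graph is the $k\times k$ grid.
   Context: A $(k,k)$-bilabelled graph is $\boldsymbol F=(F,\boldsymbol u,\boldsymbol v)$, $\boldsymbol u,\boldsymbol v\in V(F)^k$, with underlying graph $F$. Series composition $\boldsymbol F\cdot\boldsymbol F'$: disjoint union with $v_i$ identified with $u'_i$, multiple edges removed, labels $(\boldsymbol u,\boldsymbol v')$. Parallel composition $\boldsymbol F\odot\boldsymbol F'$: identify $u_i$ with $u'_i$, $v_i$ with $v'_i$, multiple edges removed. For $\sigma\in\mathfrak S_{2k}$, $\boldsymbol F^\sigma$ has in-labels $(w_{\sigma(1)},\dots,w_{\sigma(k)})$, out-labels $(w_{\sigma(k+1)},\dots,w_{\sigma(2k)})$, $\boldsymbol w=\boldsymbol u\boldsymbol v$. $\mathscr C_k$ = cyclic group of rotations of $(1,\dots,k,2k,\dots,k+1)$. Bilabelled minors: via edge contraction, edge deletion, deletion of unlabelled vertices. $\boldsymbol C_k$: vertices $[2k]$, in-labels $(1,\dots,k)$, out-labels $(k+1,\dots,2k)$, edges $\{i,i+1\}$ ($i\in[2k]\setminus\{k,2k\}$), $\{1,k+1\},\{k,2k\}$; $\boldsymbol M_k$: same vertices/labels, edges $\{i,i+k\}$. $\mathcal Q_k^P,\mathcal Q_k^S$ = bilabelled minors of $\boldsymbol C_k,\boldsymbol M_k$; $\mathcal Q_k$ their union. $\mathcal P_k$ = smallest class containing $\mathcal Q_k$, closed under series composition, $\boldsymbol F\mapsto\boldsymbol F\odot\boldsymbol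 Q$ ($\boldsymbol Q\in\mathcal Q_k^P$), and $\boldsymbol F\mapsto\boldsymbol F^\sigma$ ($\sigma\in\mathscr C_k$). *)

(* Defs.v *)
From mathcomp Require Import all_boot all_order.
Unset Printing Implicit Defensive.

(* A (k,k)-bilabelled graph: a finite vertex type, an edge relation (the
   underlying undirected graph has {x,y} as an edge iff bE x y || bE y x),
   in-labels u and out-labels v. *)
Record bgraph (k : nat) := BGraph {
  bV : finType;
  bE : rel bV;
  bin : 'I_k -> bV;
  bout : 'I_k -> bV }.

Arguments bV {k} _.
Arguments bE {k} _ _ _ : rename.
Arguments bin {k} _ _.
Arguments bout {k} _ _.
Arguments BGraph {k} _ _ _ _.

Definition adj k (F : bgraph k) : rel (bV F) := fun x y => bE F x y || bE F y x.
Arguments adj {k} F x y.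

Definition biso {k} (F H : bgraph k) : Prop :=
  exists f : bV F -> bV H, [/\ bijective f,
    forall x y, adj H (f x) (f y) = adj F x y,
    forall i, bin H i = f (bin F i) & forall i, bout H i = f (bout F i)].

(* H (with map h : V -> V(H)) is the quotient of the (undirected) graph (V, A)
   by the equivalence relation generated by the symmetric relation R, with
   multiple edges removed. *)
Definition quot_of {k} {V : finType} (A R : rel V) {H : bgraph k} (h : V -> bV H) : Prop :=
  [/\ forall p, exists a, h a = p,
      forall a b, (h a == h b) = connect R a b &
      forall p q, adj H p q <-> exists a b, [/\ h a = p, h b = q & A a b || A b a]].

Definition sym_rel {V : Type} (R : rel V) : rel V := fun a b => R a b || R b a.

Definition sum_adj {k} (F F' : bgraph k) : rel (bV F + bV F') :=
  fun a b => match a, b with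
  | inl x, inl y => adj F x y
  | inr x, inr y => adj F' x y
  | _, _ => false end.

Definition is_series {k} (F F' H : bgraph k) : Prop :=
  exists h : bV F + bV F' -> bV H,
    [/\ quot_of (sum_adj F F')
          (sym_rel (fun a b => [exists i : 'I_k, (a == inl (bout F i)) && (b == inr (bin F' i))]))
          h,
        forall i, bin H i = h (inl (bin F i)) &
        forall i, bout H i = h (inr (bout F' i))].

Definition is_parallel {k} (F F' H : bgraph k) : Prop :=
  exists h : bV F + bV F' -> bV H,
    [/\ quot_of (sum_adj F F')
          (sym_rel (fun a b => [exists i : 'I_k,
              ((a == inl (bin F i)) && (b == inr (bin F' i)))
           || ((a == inl (bout F i)) && (b == inr (bout F' i)))]))
          h,
        forall i, bin H i = h (inl (bin F i)) &
        forall i, bout H i = h (inl (bout F i))].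

(* Positions 0..2k-1 of w = u v (0-indexed).  cycpos k lists the cyclic order
   (1,...,k,2k,...,k+1) (1-indexed): index j |-> position; it is an involution. *)
Definition cycpos (k j : nat) : nat := if j < k then j else 3 * k - 1 - j.
(* the rotation by r steps along that cyclic order, as a map on positions *)
Definition rotpos (k r p : nat) : nat := cycpos k ((cycpos k p + r) %% (k + k)).
Definition rot_ord (k r : nat) (p : 'I_(k + k)) : 'I_(k + k) := insubd p (rotpos k r p).

Definition wlab {k} (F : bgraph k) (p : 'I_(k + k)) : bV F :=
  match split p with inl i => bin F i | inr i => bout F i end.

(* F^sigma for sigma the r-th power of the rotation in C_k *)
Definition rot_bg {k} (r : nat) (F : bgraph k) : bgraph k :=
  @BGraph k (bV F) (bE F)
    (fun i => wlab F (rot_ord k r (lshift k i)))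
    (fun i => wlab F (rot_ord k r (rshift k i))).

Definition edge_del {k} (G H : bgraph k) : Prop :=
  exists a b, adj G a b /\ exists h : bV G -> bV H,
    [/\ quot_of (fun x y => adj G x y && ~~ (((x == a) && (y == b)) || ((x == b) && (y == a))))
                (fun _ _ => false) h,
        forall i, bin H i = h (bin G i) & forall i, bout H i = h (bout G i)].

Definition edge_contr {k} (G H : bgraph k) : Prop :=
  exists a b, adj G a b /\ exists h : bV G -> bV H,
    [/\ quot_of (fun x y => adj G x y && ~~ (((x == a) && (y == b)) || ((x == b) && (y == a))))
                (sym_rel (fun x y => (x == a) && (y == b))) h,
        forall i, bin H i = h (bin G i) & forall i, bout H i = h (bout G i)].

Definition vertex_del {k} (G H : bgraph k) : Prop :=
  exists a : bV G, exists f : bV H -> bV G,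
    [/\ injective f, forall p, f p != a, forall x, x != a -> exists p, f p = x,
        forall p q, adj H p q = adj G (f p) (f q) &
        (forall i, bin G i = f (bin H i)) /\ (forall i, bout G i = f (bout H i))].

Inductive bminor {k} (G : bgraph k) : bgraph k -> Prop :=
  | bminor_refl : bminor G G
  | bminor_step H H' : bminor G H ->
      edge_del H H' \/ edge_contr H H' \/ vertex_del H H' -> bminor G H'.

(* C_k and M_k on vertices 'I_(2k) (0-indexed) *)
Definition Cedge (k : nat) : rel 'I_(k + k) := fun x y =>
  [|| (y == x.+1 :> nat) && (x.+1 != k) && (x.+1 != k + k),
      (x == 0 :> nat) && (y == k :> nat)
    | (x == k.-1 :> nat) && (y == (k + k).-1 :> nat)].
Definition Medge (k : nat) : rel 'I_(k + k) := fun x y => y == x + k :> nat.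

Definition C_bg (k : nat) : bgraph k :=
  @BGraph k 'I_(k + k) (Cedge k) (fun i => lshift k i) (fun i => rshift k i).
Definition M_bg (k : nat) : bgraph k :=
  @BGraph k 'I_(k + k) (Medge k) (fun i => lshift k i) (fun i => rshift k i).

Definition QP {k} (Q : bgraph k) : Prop := bminor (C_bg k) Q.
Definition QS {k} (Q : bgraph k) : Prop := bminor (M_bg k) Q.

Inductive Pk {k : nat} : bgraph k -> Prop :=
  | Pk_QP Q : QP Q -> Pk Q
  | Pk_QS Q : QS Q -> Pk Q
  | Pk_series F F' H : Pk F -> Pk F' -> is_series F F' H -> Pk H
  | Pk_par F Q H : Pk F -> QP Q -> is_parallel F Q H -> Pk H
  | Pk_rot F (r : nat) : Pk F -> Pk (rot_bg r F)
  | Pk_iso F H : Pk F -> biso F H -> Pk H.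

Definition grid_adj (k : nat) : rel ('I_k * 'I_k) := fun p q =>
  ((p.1 == q.1) && ((p.2.+1 == q.2 :> nat) || (q.2.+1 == p.2 :> nat)))
  || ((p.2 == q.2) && ((p.1.+1 == q.1 :> nat) || (q.1.+1 == p.1 :> nat))).

Definition underlying_is_grid {k} (F : bgraph k) : Prop :=
  exists f : bV F -> 'I_k * 'I_k, bijective f /\
    forall x y, adj F x y = grid_adj k (f x) (f y).

(* Main.v *)
Require Import Defs.
From mathcomp Require Import all_boot all_order.
From mathcomp Require Import zify.

Definition gE (n k : nat) : rel ('I_n * 'I_k) := fun p q =>
  ((p.1 == q.1) && ((p.2.+1 == q.2 :> nat) || (q.2.+1 == p.2 :> nat)))
  || ((p.2 == q.2) && ((p.1.+1 == q.1 :> nat) || (q.1.+1 == p.1 :> nat))).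

Lemma gEn n k (p q : 'I_n * 'I_k) : gE n k p q =
  (((p.1 : nat) == q.1) && ((p.2.+1 == q.2 :> nat) || (q.2.+1 == p.2 :> nat)))
  || (((p.2:nat) == q.2) && ((p.1.+1 == q.1 :> nat) || (q.1.+1 == p.1 :> nat))).
Proof. by []. Qed.

Lemma gE_sym n k p q : gE n k p q = gE n k q p.
Proof. rewrite !gEn; apply/idP/idP; lia. Qed.

Definition Gr k n : bgraph k :=
  BGraph ('I_n.+1 * 'I_k)%type (gE n.+1 k) (fun i => (ord0, i)) (fun i => (ord_max, i)).

Lemma adjGr k n p q : adj (Gr k n) p q = gE n.+1 k p q.
Proof. by rewrite /adj /= [gE _ _ q p]gE_sym orbb. Qed.

Lemma pair_ordE a b (x y : 'I_a * 'I_b) :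
  (x.1 : nat) = y.1 -> (x.2 : nat) = y.2 -> x = y.
Proof.
case: x y => [x1 x2] [y1 y2] /= h1 h2.
by rewrite (val_inj h1) (val_inj h2).
Qed.

Lemma quot_intro k (V : finType) (A R : rel V) (H : bgraph k) (h : V -> bV H) :
  (forall p, exists a, h a = p) ->
  (forall a b, R a b -> h a = h b) ->
  (forall a b, h a = h b -> connect R a b) ->
  (forall p q, adj H p q <-> exists a b, [/\ h a = p, h b = q & A a b || A b a]) ->
  quot_of A R h.
Proof.
move=> Hs HR Hc Ha; split=> // a b; apply/eqP/idP => [/Hc //|].
case/connectP=> s; elim: s a => [|c s IH] a /= => [_ -> //|].
by move=> /andP[/HR -> ?] ?; apply: IH.
Qed.
Definition gM k (p : 'I_(k+k)) : 'I_2 * 'I_k :=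
  match split p with inl i => (ord0, i) | inr i => (ord_max, i) end.

Lemma gMv k (p : 'I_(k+k)) : (p < k /\ ((gM k p).1 : nat) = 0 /\ ((gM k p).2 : nat) = p)
   \/ (k <= p /\ ((gM k p).1 : nat) = 1 /\ ((gM k p).2 : nat) = p - k).
Proof. rewrite /gM; case: splitP => j /= ->; have := ltn_ord j; lia. Qed.

Definition pos k (a : 'I_(k+k) + 'I_(k+k)) : 'I_(k+k) :=
  match a with inl x => x | inr x => x end.

Arguments pos {k} a.
Definition preM k (p : 'I_2 * 'I_k) : 'I_(k+k) :=
  if (p.1 : nat) == 0 then lshift k p.2 else rshift k p.2.

Lemma preMv k (p : 'I_2 * 'I_k) : ((p.1 : nat) = 0 /\ (preM k p : nat) = p.2)
   \/ ((p.1 : nat) = 1 /\ (preM k p : nat) = k + p.2).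
Proof. rewrite /preM; have := ltn_ord p.1; case: eqP => /= ?; lia. Qed.

Lemma gM_pre k (p : 'I_2 * 'I_k) : gM k (preM k p) = p.
Proof.
have := preMv k p; have := gMv k (preM k p); have := ltn_ord p.2; have := ltn_ord p.1.
move=> *; apply: pair_ordE; lia.
Qed.

Lemma CedgeP k (x y : 'I_(k+k)) : Cedge k x y ->
  ((y:nat) = x.+1 /\ x.+1 <> k /\ x.+1 <> k + k) \/ ((x:nat) = 0 /\ (y:nat) = k)
  \/ ((x:nat) = k.-1 /\ (y:nat) = (k+k).-1).
Proof.
rewrite /Cedge => /orP[/andP[/andP[/eqP ? /eqP ?] /eqP ?]|/orP[/andP[/eqP ? /eqP ?]|/andP[/eqP ? /eqP ?]]].
- by left.
- by right; left.
- by right; right.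
Qed.

Lemma Cedge_path k (x y : 'I_(k+k)) : (y:nat) = x.+1 -> x.+1 <> k -> x.+1 <> k + k -> Cedge k x y.
Proof. by move=> /eqP h1 /eqP h2 /eqP h3; rewrite /Cedge h1 h2 h3. Qed.

Lemma gMcase k (x : 'I_(k+k)) (P : Prop) :
  ((x : nat) < k -> ((gM k x).1 : nat) = 0 -> ((gM k x).2 : nat) = x -> P) ->
  (k <= x -> ((gM k x).1 : nat) = 1 -> ((gM k x).2 : nat) = x - k -> P) -> P.
Proof. by move=> H1 H2; case: (gMv k x) => [[? [? ?]]|[? [? ?]]]; [apply: H1|apply: H2]. Qed.

Lemma par k : is_parallel (M_bg k) (C_bg k) (Gr k 1).
Proof.
exists (fun a => gM k (pos a)); split.
- apply: quot_intro.
  + by move=> p; exists (inl (preM k p)); exact: gM_pre.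
  + by move=> a b /orP[]/existsP[i /orP[]/andP[]/eqP-> /eqP->].
  + move=> a b Hab.
    have Hp : pos a = pos b.
      apply: ord_inj; move: Hab; have := gMv k (pos a); have := gMv k (pos b).
      move=> H1 H2 H3; have e1 := congr1 (fun x => nat_of_ord x.1) H3.
      have e2 := congr1 (fun x => nat_of_ord x.2) H3; simpl in e1, e2; lia.
    case: a b Hab Hp => [x|x] [y|y] /= _ E; subst y; first (by apply: connect0);
      last (by apply: connect0); apply: connect1; apply/orP;
      [left|right]; apply/existsP; case: (split_ordP x) => j ->; exists j;
      by rewrite /= !eqxx ?orbT.
  + move=> p q; rewrite adjGr; split.
    * move: p q => [p1 p2] [q1 q2]; rewrite gEn; cbn [fst snd] => E.
      have Hp := preMv k (p1, p2); have Hq := preMv k (q1, q2); move: Hp Hq; cbn [fst snd] => Hp Hq.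
      have := ltn_ord p2; have := ltn_ord p1; have := ltn_ord q2; have := ltn_ord q1 => B1 B2 B3 B4.
      case: (boolP ((p1 : nat) == q1)) => Hrow.
      - exists (inr (preM k (p1, p2))), (inr (preM k (q1, q2))).
        split; [exact: gM_pre | exact: gM_pre | ].
        cbn [sum_adj]; rewrite /adj; cbn [bE C_bg].
        have : ((p2 : nat).+1 = q2 \/ (q2 : nat).+1 = p2) by clear -E Hrow; lia.
        case=> H.
        + apply/orP; left; apply/orP; left; apply: Cedge_path; clear -Hp Hq H Hrow B1 B2 B3 B4; lia.
        + apply/orP; left; apply/orP; right; apply: Cedge_path; clear -Hp Hq H Hrow B1 B2 B3 B4; lia.
      - exists (inl (preM k (p1, p2))), (inl (preM k (q1, q2))).
        split; [exact: gM_pre | exact: gM_pre | ].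
        cbn [sum_adj]; rewrite /adj; cbn [bE M_bg]; rewrite /Medge.
        have : (p2 : nat) = q2 by clear -E Hrow; lia.
        move=> H; clear -Hp Hq H Hrow B1 B2 B3 B4; lia.
    * move=> [a [b [<- <-]]]; case: a b => [x|x] [y|y] //; cbn [sum_adj pos];
      rewrite /adj; cbn [bE M_bg C_bg].
      - rewrite /Medge => H; move: (gMv k x) (gMv k y).
        case: (gM k x) => [a1 a2]; case: (gM k y) => [b1 b2]; rewrite gEn; cbn [fst snd].
        have := ltn_ord x; have := ltn_ord y; clear -H; lia.
      - move=> H.
        have {H} : Cedge k x y \/ Cedge k y x by case/orP: H => /orP[] ->; auto.
        case=> /CedgeP H; move: (gMv k x) (gMv k y);
        case: (gM k x) => [a1 a2]; case: (gM k y) => [b1 b2]; rewrite gEn; cbn [fst snd];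
        have := ltn_ord x; have := ltn_ord y; clear -H; lia.
- move=> i; change ((ord0, i) = gM k (lshift k i)); move: (gMv k (lshift k i)).
  have : (lshift k i : nat) = i by [].
  case: (gM k (lshift k i)) => [a b] /= E H; apply: pair_ordE => /=; have := ltn_ord i; lia.
- move=> i; change ((ord_max, i) = gM k (rshift k i)); move: (gMv k (rshift k i)).
  have : (rshift k i : nat) = k + i by [].
  case: (gM k (rshift k i)) => [a b] /= E H; apply: pair_ordE => /=; have := ltn_ord i; lia.
Qed.

Definition hS k n (a : ('I_2 * 'I_k) + ('I_n.+1 * 'I_k)) : 'I_n.+2 * 'I_k :=
  match a with
  | inl (r, c) => (widen_ord (isT : 2 <= n.+2) r, c)
  | inr (r, c) => (lift ord0 r, c)
  end.

Lemma ser k n : is_series (Gr k 1) (Gr k n) (Gr k n.+1).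
Proof.
exists (hS k n); split.
- apply: quot_intro.
  + move=> [r c]; have := ltn_ord r => Br.
    case: (boolP (r <= 1)) => Hr.
    * have v : (inord r : 'I_2) = r :> nat by rewrite inordK //; lia.
      by exists (inl (inord r, c)); apply: pair_ordE; [exact: v|].
    * have v : (inord r.-1 : 'I_n.+1).+1 = r :> nat by rewrite inordK //; lia.
      by exists (inr (inord r.-1, c)); apply: pair_ordE; [exact: v|].
  + by move=> a b /orP[]/existsP[i /andP[/eqP-> /eqP->]]; apply: pair_ordE.
  + move=> [[x1 x2]|[x1 x2]] [[y1 y2]|[y1 y2]] E;
      have e1 := congr1 (fun p => nat_of_ord p.1) E;
      have e2 := congr1 (fun p => nat_of_ord p.2) E; move: e1 e2; cbn [hS fst snd];
      rewrite ?lift0 /= => e1 e2.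
    * have ex1 : x1 = y1 by apply: ord_inj; lia.
      have ex2 : x2 = y2 by apply: ord_inj; lia.
      subst; exact: connect0.
    * apply: connect1; apply/orP; left; apply/existsP; exists x2; apply/andP; split;
        apply/eqP; f_equal; apply: pair_ordE => /=; have := ltn_ord x1; lia.
    * apply: connect1; apply/orP; right; apply/existsP; exists y2; apply/andP; split;
        apply/eqP; f_equal; apply: pair_ordE => /=; have := ltn_ord y1; lia.
    * have ex1 : x1 = y1 by apply: ord_inj; lia.
      have ex2 : x2 = y2 by apply: ord_inj; lia.
      subst; exact: connect0.
  + move=> p q; rewrite adjGr; split.
    * move: p q => [p1 p2] [q1 q2]; rewrite gEn; cbn [fst snd] => E.
      have := ltn_ord p1; have := ltn_ord q1 => B1 B2.
      case: (boolP ((p1 <= 1) && (q1 <= 1))) => Hc.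
      - have v1 : (inord p1 : 'I_2) = p1 :> nat by rewrite inordK //; lia.
        have v2 : (inord q1 : 'I_2) = q1 :> nat by rewrite inordK //; lia.
        exists (inl (inord p1, p2)), (inl (inord q1, q2)); split.
        + by apply: pair_ordE; [exact: v1|].
        + by apply: pair_ordE; [exact: v2|].
        + cbn [sum_adj]; rewrite /adj; cbn [bE Gr]; rewrite !gEn; cbn [fst snd].
          rewrite v1 v2; lia.
      - have v1 : (inord p1.-1 : 'I_n.+1) = p1.-1 :> nat by rewrite inordK //; lia.
        have v2 : (inord q1.-1 : 'I_n.+1) = q1.-1 :> nat by rewrite inordK //; lia.
        exists (inr (inord p1.-1, p2)), (inr (inord q1.-1, q2)); split.
        + apply: pair_ordE; [|by []]; cbn [fst]; rewrite lift0 v1; lia.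
        + apply: pair_ordE; [|by []]; cbn [fst]; rewrite lift0 v2; lia.
        + cbn [sum_adj]; rewrite /adj; cbn [bE Gr]; rewrite !gEn; cbn [fst snd].
          rewrite v1 v2; lia.
    * move=> [a [b [<- <-]]]; case: a b => [[x1 x2]|[x1 x2]] [[y1 y2]|[y1 y2]] //;
      cbn [sum_adj hS]; rewrite /adj; cbn [bE Gr]; rewrite !gEn; cbn [fst snd];
      rewrite ?lift0 /=; lia.
- by move=> i; apply: pair_ordE.
- by move=> i; apply: pair_ordE.
Qed.

Lemma PkGr1 k : Pk (Gr k 1).
Proof. exact: (Pk_par _ _ _ (Pk_QS _ (bminor_refl _)) (bminor_refl _) (par k)). Qed.

Lemma PkGr k m : Pk (Gr k m.+1).
Proof.
elim: m => [|m IH]; first exact: PkGr1.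
exact: (Pk_series _ _ _ (PkGr1 k) IH (ser k m.+1)).
Qed.

Definition a0 : 'I_(1+1) := @Ordinal 2 0 isT.
Definition a1 : 'I_(1+1) := @Ordinal 2 1 isT.

Lemma I2cases (x : 'I_(1+1)) : x = a0 \/ x = a1.
Proof.
case: x => [[|[|m]] Hm]; [left|right|by []]; exact: val_inj.
Qed.

Lemma contr1 : edge_contr (C_bg 1) (Gr 1 0).
Proof.
exists a0, a1; split; first by [].
exists (fun _ => ((ord0, ord0) : 'I_1 * 'I_1)); split.
- apply: quot_intro.
  + move=> [p1 p2]; exists a0; apply: pair_ordE => /=.
    * by have := ltn_ord p1; lia.
    * by have := ltn_ord p2; lia.
  + by [].
  + move=> a b _; case: (I2cases a) => ->; case: (I2cases b) => ->;
      solve [exact: connect0 | by apply: connect1].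
  + move=> [p1 p2] [q1 q2]; rewrite adjGr gEn; cbn [fst snd]; split.
    * have := ltn_ord p1; have := ltn_ord q1; have := ltn_ord p2; have := ltn_ord q2; lia.
    * move=> [a [b [_ _ H]]]; move: H; case: (I2cases a) => ->; case: (I2cases b) => ->; by [].
- move=> i; apply: pair_ordE => //=; have := ltn_ord i; lia.
- move=> i; apply: pair_ordE => //=; have := ltn_ord i; lia.
Qed.

Lemma PkC1 : Pk (Gr 1 0).
Proof.
apply: Pk_QP; apply: bminor_step; first exact: bminor_refl.
by right; left; exact: contr1.
Qed.

Theorem lemma4p10 (k : nat) : exists F : bgraph k, Pk F /\ underlying_is_grid F.
Proof.
case: k => [|[|m]].
- exists (Gr 0 1); split; first exact: PkGr.
  exists (fun p : 'I_2 * 'I_0 => (p.2, p.2)); split.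
  + exists (fun q : 'I_0 * 'I_0 => (ord0, q.1)).
    * by move=> [x [c Hc]]; exfalso; move: Hc; rewrite ltn0.
    * by move=> [[c Hc] y]; exfalso; move: Hc; rewrite ltn0.
  + by move=> [x [c Hc]]; exfalso; move: Hc; rewrite ltn0.
- exists (Gr 1 0); split; first exact: PkC1.
  by exists id; split; [exists id | move=> x y; rewrite adjGr].
- exists (Gr m.+2 m.+1); split; first exact: PkGr.
  by exists id; split; [exists id | move=> x y; rewrite adjGr].
Qed.
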